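(* Let $S$ be a $1$-synchronizable system. Let $\tau\in T_0(S)$ and $m_1,\dots,m_n\in\Sigma_M$ be such that $\tau\cdot !m_1\cdots !m_n\in T_n(S)$. Then $\tau\cdot !?m_1\cdots !?m_n\in T_0(S)$.
   Context: A message set $M=(\Sigma_M,N,\mathrm{src},\mathrm{dst})$: finite set of messages, $N\ge1$ peers, $\mathrm{src}(a)\neq\mathrm{dst}(a)\in\{1,\dots,N\}$. Actions $!a$ (by peer $\mathrm{src}(a)$), $?a$ (by peer $\mathrm{dst}(a)$); traces are finite action sequences; $!?a$ abbreviates $!a\cdot?a$. For a trace $\tau$, $\pi_!(\tau)$ is the sequence of sent messages; $\mathrm{buf}_{i\to j}(\tau)$ is the word $w$ (if any) with (sent on $i\to j$) $=$ (received on $i\to j$)$\cdot w$. $\tau$ is FIFO ($k$-bounded FIFO) if for all $i,j$ and prefixes $\tau'$, $\mathrm{buf}_{i\to j}(\tau')$ is defined (and has length $\le k$); synchronous if of the form $!?a_1\cdots!?a_k$. A system $S=(P_1,\dots,P_N)$: finite automata $P_i$ (all states accepting) over actions of peer $i$, with one FIFO channel per ordered pair $i\neq j$. A configuration: one control state per peer and contents $w_{i,j}$ of channels; stable if all channels empty. $!a$ ($\mathrm{src}(a)=i,\mathrm{dst}(a)=j$) moves $P_i$ and appends $a$ to $w_{i,j}$; $?a$ moves $P_j$ and removes $a$ from the head of $w_{i,j}$; $c_0$ is the initial configuration. $T_k(S)$ ($k\ge1$): $k$-bounded FIFO traces $\tau$ with $c_0\xrightarrow{\tau}c$ for some $c$;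 $T_0(S)$: synchronous such traces; $T_\omega(S)=\bigcup_kT_k(S)$. $ST_k(S)=\{\pi_!(\tau)\mid\tau\in T_k(S)\}\cup\{(\pi_!(\tau),c)\mid c_0\xrightarrow{\tau}c,\ c\text{ stable},\ \tau\in T_k(S)\}$; $S$ is $1$-synchronizable if $ST_0(S)=ST_1(S)$. *)

(* Defs.v *)
From mathcomp Require Import all_boot.
Set Implicit Arguments. Unset Strict Implicit. Unset Printing Implicit Defensive.

Section Systems.

(* Message set M = (Msg, N, src, dst); peers are 'I_N (= {1..N} shifted). *)
Variables (N : nat) (Msg : finType) (src dst : Msg -> 'I_N).

Inductive action := Send of Msg | Recv of Msg.

Definition actor (x : action) : 'I_N :=
  match x with Send a => src a | Recv a => dst a end.

Definition trace := seq action.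

Definition sends (t : trace) : seq Msg :=
  pmap (fun x => if x is Send a then Some a else None) t.

Definition sent_on (i j : 'I_N) (t : trace) : seq Msg :=
  [seq a <- sends t | (src a == i) && (dst a == j)].
Definition recv_on (i j : 'I_N) (t : trace) : seq Msg :=
  [seq a <- pmap (fun x => if x is Recv a then Some a else None) t
     | (src a == i) && (dst a == j)].

(* buf_{i->j}(t) = Some w  iff  sent = received ++ w *)
Definition buf_def (i j : 'I_N) (t : trace) (w : seq Msg) : Prop :=
  sent_on i j t = recv_on i j t ++ w.

Definition kfifo (k : nat) (t : trace) : Prop :=
  forall (n : nat) (i j : 'I_N),
    exists w, buf_def i j (take n t) w /\ size w <= k.

Definition synch_of (ms : seq Msg) : trace :=
  flatten [seq [:: Send a; Recv a] | a <- ms].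
Definition synchronous (t : trace) : Prop := exists ms, t = synch_of ms.

(* A system: one finite automaton per peer (all states accepting).
   Transitions are only ever consulted on actions of the peer itself. *)
Record system := System {
  state : 'I_N -> finType;
  init : forall i, state i;
  trans : forall i, state i -> action -> state i -> bool
}.

Record config (S : system) := Config {
  ctrl : forall i, state S i;
  chan : 'I_N -> 'I_N -> seq Msg
}.

Definition c0 (S : system) : config S := Config (init S) (fun _ _ => [::]).

Definition stable (S : system) (c : config S) : Prop :=
  forall i j, chan c i j = [::].

Definition step (S : system) (c : config S) (x : action) (c' : config S) : Prop :=
  [/\ trans (ctrl c (actor x)) x (ctrl c' (actor x)),
      (forall k, k != actor x -> ctrl c' k = ctrl c k),
      (forall i j, (i, j) != (src (match x with Send a | Recv a => a end),
                              dst (match x with Send a | Recv a => a end)) ->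
                   chan c' i j = chan c i j) &
      match x with
      | Send a => chan c' (src a) (dst a) = rcons (chan c (src a) (dst a)) a
      | Recv a => chan c (src a) (dst a) = a :: chan c' (src a) (dst a)
      end].

Inductive reach (S : system) : config S -> trace -> config S -> Prop :=
  | reach_nil c : reach c [::] c
  | reach_cons c x c' t c'' : step c x c' -> reach c' t c'' -> reach c (x :: t) c''.

Definition Tk (S : system) (k : nat) (t : trace) : Prop :=
  (if k is 0 then synchronous t else kfifo k t) /\ exists c, reach (c0 S) t c.

Inductive obs (S : system) :=
  | ObsW of seq Msg
  | ObsC of seq Msg & config S.

Definition STk (S : system) (k : nat) (o : obs S) : Prop :=
  match o with
  | ObsW w => exists t, Tk S k t /\ sends t = w
  | ObsC w c => exists t, [/\ Tk S k t, sends t = w, reach (c0 S) t c & stable c]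
  end.

Definition one_synchronizable (S : system) : Prop :=
  forall o : obs S, STk 0 o <-> STk 1 o.

End Systems.

(* Main.v *)
Require Import Defs.
From mathcomp Require Import all_boot zify.
Set Implicit Arguments. Unset Strict Implicit. Unset Printing Implicit Defensive.

Section Pf.
Variables (N : nat) (Msg : finType) (src dst : Msg -> 'I_N).
Hypothesis hsd : forall a, src a != dst a.
Variable S : system N Msg.

Local Notation act := (action Msg).
Local Notation actor := (actor src dst).
Definition msg (x : act) : Msg := match x with Send a | Recv a => a end.
Definition proj (i : 'I_N) (t : seq act) := filter (fun x => actor x == i) t.
Definition chp (i j : 'I_N) (a : Msg) := (src a == i) && (dst a == j).
Definition chanproj i j (t : seq act) := filter (fun x => chp i j (msg x)) t.
Definition recvs (t : seq act) := pmap (fun x => if x is Recv a then Some a else None) t.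

Inductive lrun (i : 'I_N) : state S i -> seq act -> state S i -> Prop :=
| lr_nil s : lrun s [::] s
| lr_cons s x s' w s'' : trans s x s' -> lrun s' w s'' -> lrun s (x :: w) s''.

Definition L i w := exists s, lrun (init S i) w s.

Lemma lrun_consE i (s s'' : state S i) x w :
  lrun s (x :: w) s'' -> exists s', trans s x s' /\ lrun s' w s''.
Proof.
move=> H; move e: (x :: w) H => xw H; case: H e => // s0 y s' w' s2 Htr Hr [-> ->].
by exists s'.
Qed.

Lemma lrun_cat i (s s'' : state S i) u v :
  lrun s (u ++ v) s'' -> exists s', lrun s u s' /\ lrun s' v s''.
Proof.
elim: u s => [|x u IH] s /=; first by move=> H; exists s; split => //; constructor.
move/lrun_consE => [s1 [Ht Hr]]; have [s2 [H1 H2]] := IH _ Hr.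
by exists s2; split => //; econstructor; eauto.
Qed.

Lemma L_prefix i u v : L i (u ++ v) -> L i u.
Proof. by move=> [s /lrun_cat [s' [H _]]]; exists s'. Qed.

Lemma reach_lrun c t c' : reach src dst c t c' ->
  forall i, lrun (ctrl c i) (proj i t) (ctrl c' i).
Proof.
elim => [c1|c1 x c2 t' c3 st _ IH] i /=; first by constructor.
case: st => Htr Hctrl _ _; rewrite /proj /=.
case: eqP => [e|ne].
  by subst i; econstructor; [exact: Htr| exact: IH].
rewrite -(Hctrl i); first exact: IH.
by apply/eqP => e; apply: ne; rewrite e.
Qed.

Fixpoint fifo1 (q : seq Msg) (u : seq act) : Prop :=
  match u with
  | [::] => True
  | Send a :: u' => fifo1 (rcons q a) u'
  | Recv a :: u' => if q is b :: q' then a = b /\ fifo1 q' u' else False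
  end.

Definition upd (f : forall i, state S i) (a : 'I_N) (s : state S a) :
  forall i, state S i :=
  fun i => match @eqP _ a i with
           | ReflectT e => ecast i (state S i) e s
           | ReflectF _ => f i end.
Arguments upd : clear implicits.

Lemma upd_eq f a s : upd f a s a = s.
Proof.
rewrite /upd; case: (@eqP _ a a) => // e.
by rewrite (eq_irrelevance e (erefl a)).
Qed.

Lemma upd_neq f a s i : a != i -> upd f a s i = f i.
Proof. by rewrite /upd; case: eqP => // e; rewrite e eqxx. Qed.

Definition nchan (ch : 'I_N -> 'I_N -> seq Msg) (x : act) :=
  match x with
  | Send m => fun i j => if chp i j m then rcons (ch i j) m else ch i j
  | Recv m => fun i j => if chp i j m then behead (ch i j) else ch i j end.

Lemma nchan_other ch x i j : (i, j) != (src (msg x), dst (msg x)) -> nchan ch x i j = ch i j.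
Proof.
case: x => m /= H; rewrite /chp; case: ifP => // /andP [/eqP e1 /eqP e2];
by rewrite e1 e2 eqxx in H.
Qed.

Lemma nchan_fifo ch x t i j : fifo1 (ch i j) (chanproj i j (x :: t)) ->
  fifo1 (nchan ch x i j) (chanproj i j t).
Proof.
rewrite /chanproj; case: x => m /=; case: ifP => Hc //=.
by case: (ch i j) => // b q [<- H].
Qed.

Lemma nchan_last ch x t : fifo1 (ch (src (msg x)) (dst (msg x))) (chanproj (src (msg x)) (dst (msg x)) (x :: t)) ->
  match x with
      | Send a => nchan ch x (src a) (dst a) = rcons (ch (src a) (dst a)) a
      | Recv a => ch (src a) (dst a) = a :: nchan ch x (src a) (dst a)
      end.
Proof.
rewrite /chanproj; case: x => m /=; rewrite /chp !eqxx //=.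
by case: (ch (src m) (dst m)) => // b q [-> _].
Qed.

Lemma comp t : forall c : config S,
  (forall i j, fifo1 (chan c i j) (chanproj i j t)) ->
  (forall i, exists s, lrun (ctrl c i) (proj i t) s) ->
  exists c', reach src dst c t c'.
Proof.
elim: t => [|x t IH] c Hf Hl; first by exists c; constructor.
have [s1 [Htr Hrest]] : exists s1, trans (ctrl c (actor x)) x s1 /\ exists s, lrun s1 (proj (actor x) t) s.
  case: (Hl (actor x)) => s; rewrite /proj /= eqxx => /lrun_consE [s1 [H1 H2]].
  by exists s1; split => //; exists s.
pose c' := Config (upd (ctrl c) (actor x) s1) (nchan (chan c) x).
have st : step src dst c x c'.
  split.
  - by rewrite /c' /= upd_eq.
  - by move=> k nk; rewrite /c' /= upd_neq // eq_sym.
  - by move=> i j; rewrite /c' /=; apply: nchan_other.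
  - exact: (nchan_last (Hf _ _)).
have Hf' : forall i j, fifo1 (chan c' i j) (chanproj i j t).
  by move=> i j; apply: nchan_fifo.
have Hl' : forall i, exists s, lrun (ctrl c' i) (proj i t) s.
  move=> i; rewrite /c' /=; case: (eqVneq (actor x) i) => [e|ne].
    by subst i; rewrite upd_eq.
  rewrite upd_neq //; case: (Hl i) => s; rewrite /proj /= (negbTE ne) => H.
  by exists s.
have [c'' Hr] := IH c' Hf' Hl'.
by exists c''; econstructor; eauto.
Qed.


Fixpoint altb (u : seq act) : bool :=
  match u with
  | [::] => true
  | Send a :: u' => match u' with
                    | [::] => true
                    | Recv b :: u'' => (a == b) && altb u''
                    | _ => false end
  | _ => false
  end.

Lemma altb_ind (P : seq act -> Prop) :
  P [::] -> (forall a, P [:: Send a]) ->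
  (forall a u, altb u -> P u -> P (Send a :: Recv a :: u)) ->
  forall u, altb u -> P u.
Proof.
move=> H0 H1 H2 u; have [n] := ubnP (size u); elim: n u => // n IH.
case=> [|[a|a] [|[b|b] u]] //= Hs.
by case/andP => /eqP <- Hu; apply: H2 => //; apply: IH => //; apply: ltnW.
Qed.

Lemma altb_fifo1 u : altb u -> fifo1 [::] u.
Proof. by move: u; apply: (@altb_ind (fun u => fifo1 [::] u)) => //= a u _ IH. Qed.

Lemma altb_take u : altb u -> forall m, altb (take m u).
Proof.
move: u; apply: (@altb_ind (fun u => forall m, altb (take m u))) => [|a|a u _ IH] [|[|m]] //=.
by rewrite eqxx IH.
Qed.

Lemma altb_buf u : altb u -> exists w, sends u = recvs u ++ w /\ size w <= 1.
Proof.
move: u; apply: (@altb_ind (fun u => exists w, sends u = recvs u ++ w /\ size w <= 1)) => [|a|a u _ [w [e hw]]].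
- by exists [::].
- by exists [:: a].
- by exists w; rewrite /sends /recvs /= -/(sends u) -/(recvs u) e.
Qed.

Lemma altb_synch_cat (C : seq Msg) v : altb (synch_of C ++ v) = altb v.
Proof. by elim: C => //= c C IH; rewrite eqxx. Qed.

Lemma filter_take (T : Type) (p : pred T) (t : seq T) n :
  exists m, filter p (take n t) = take m (filter p t).
Proof.
elim: t n => [|x t IH] [|n] /=; try by exists 0; rewrite ?take0.
have [m e] := IH n; case: (p x); last by exists m.
by exists m.+1; rewrite /= e.
Qed.

Lemma sent_onE i j u : sent_on src dst i j u = sends (chanproj i j u).
Proof.
rewrite /sent_on /chanproj /chp; elim: u => [|[a|a] u IH] //=.
  by rewrite /sends /= -/(sends u); case: ifP => _ //=; rewrite IH.
by case: ifP => _ //=.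
Qed.

Lemma recv_onE i j u : recv_on src dst i j u = recvs (chanproj i j u).
Proof.
rewrite /recv_on /chanproj /chp; elim: u => [|[a|a] u IH] //=.
  by case: ifP => _ //=.
by rewrite /recvs /= -/(recvs u); case: ifP => _ //=; rewrite IH.
Qed.

Lemma kfifo1 t : (forall i j, altb (chanproj i j t)) -> kfifo src dst 1 t.
Proof.
move=> H n i j.
have [m e] := filter_take (fun x => chp i j (msg x)) t n.
rewrite /buf_def sent_onE recv_onE /chanproj e.
by apply: altb_buf; apply: altb_take; apply: H.
Qed.

Lemma sends_cat (u v : seq act) : sends (u ++ v) = sends u ++ sends v.
Proof. exact: pmap_cat. Qed.
Lemma sends_synch (C : seq Msg) : sends (synch_of C) = C.
Proof. by elim: C => //= c C IH; rewrite /sends /= -/(@sends Msg _) IH. Qed.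
Lemma sends_map (C : seq Msg) : sends (map (@Send Msg) C) = C.
Proof. by elim: C => //= c C IH; rewrite /sends /= -/(@sends Msg _) IH. Qed.
Lemma synch_cat (C D : seq Msg) : synch_of (C ++ D) = synch_of C ++ synch_of D.
Proof. by rewrite /synch_of map_cat flatten_cat. Qed.

Lemma chanproj_synch i j (C : seq Msg) : chanproj i j (synch_of C) = synch_of (filter (chp i j) C).
Proof.
elim: C => //= c C IH; rewrite /chanproj /synch_of /= in IH *.
by case: ifP => H /=; rewrite ?H IH.
Qed.

Lemma altb_synch (C : seq Msg) : altb (synch_of C).
Proof. by rewrite -[synch_of C]cats0 altb_synch_cat. Qed.

Lemma F1 (H1 : one_synchronizable src dst S) t :
  (forall i j, altb (chanproj i j t)) -> (forall i, L i (proj i t)) ->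
  forall i, L i (proj i (synch_of (sends t))).
Proof.
move=> Ha Hl.
have [c Hr] : exists c, reach src dst (c0 S) t c.
  apply: comp => [i j|i]; first exact: altb_fifo1.
  exact: Hl.
have : STk src dst 1 (ObsW S (sends t)).
  by exists t; split => //; split; [exact: kfifo1 | exists c].
move/H1 => [t' [[[ms' e] [c' Hr']] Hs]]; subst t'.
rewrite sends_synch in Hs; subst ms'.
by move=> i; exists (ctrl c' i); exact: (reach_lrun Hr' i).
Qed.


Lemma proj_cat i (u v : seq act) : proj i (u ++ v) = proj i u ++ proj i v.
Proof. exact: filter_cat. Qed.

Lemma proj_map_send i (C : seq Msg) :
  proj i (map (@Send Msg) C) = map (@Send Msg) (filter (fun a => src a == i) C).
Proof. by elim: C => //= c C IH; rewrite /proj /= -/(proj _ _) IH; case: ifP. Qed.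

Lemma proj_synch_nodst i (C : seq Msg) : all (fun a => dst a != i) C ->
  proj i (synch_of C) = map (@Send Msg) (filter (fun a => src a == i) C).
Proof.
elim: C => //= c C IH /andP [hc hC].
rewrite /proj /= (negbTE hc) -/(proj _ _) -/(synch_of C) IH //.
by case: ifP.
Qed.

Lemma proj_synch_src i (C : seq Msg) : all (fun a => src a == i) C ->
  proj i (synch_of C) = map (@Send Msg) C.
Proof.
move=> h; rewrite proj_synch_nodst; last first.
  by apply/allP => a /(allP h) /eqP <-; rewrite eq_sym hsd.
by move/all_filterP: h => ->.
Qed.

Lemma last_split (p : pred Msg) (s : seq Msg) : has p s ->
  exists B1 x B2, [/\ s = B1 ++ x :: B2, p x & ~~ has p B2].
Proof.
elim/last_ind: s => // s y IH; rewrite has_rcons.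
case: (boolP (p y)) => py /=.
  by move=> _; exists s, y, [::]; rewrite cats1.
move/IH => [B1 [x [B2 [-> px hB]]]].
exists B1, x, (rcons B2 y); split => //.
  by rewrite rcons_cat.
by rewrite has_rcons negb_or py.
Qed.

Lemma synch_cons (x : Msg) C : synch_of (x :: C) = [:: Send x; Recv x] ++ synch_of C.
Proof. by []. Qed.

Lemma filter_chp_nil i j (B : seq Msg) : all (fun a => dst a != j) B -> filter (chp i j) B = [::].
Proof. by elim: B => //= b B IH /andP [hb hB]; rewrite {1}/chp (negbTE hb) andbF IH. Qed.

Lemma L_eq i u v : u = v -> L i u -> L i v.
Proof. by move=> ->. Qed.

Lemma main (H1 : one_synchronizable src dst S) (A : seq Msg) n : forall ms : seq Msg,
  size ms <= n ->
  (forall i, L i (proj i (synch_of A ++ map (@Send Msg) ms))) ->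
  forall i, L i (proj i (synch_of A ++ synch_of ms)).
Proof.
elim: n => [|n IHn] ms.
  by rewrite leqn0 => /nilP -> H i; move: (H i).
case/lastP: ms => [|ms' y]; first by move=> _ H i; move: (H i).
rewrite size_rcons ltnS => Hs H.
set P := src y.
have IHm : forall i, L i (proj i (synch_of A ++ synch_of ms')).
  apply: IHn Hs _ => i; move: (H i).
  by rewrite map_rcons -cats1 catA proj_cat; apply: L_prefix.
case: (boolP (has (fun m => dst m == P) ms')) => Hh; last first.
  pose t := synch_of A ++ synch_of ms' ++ [:: Send y].
  have := @F1 H1 t.
  rewrite /t !sends_cat !sends_synch /= -cats1 synch_cat => HF; apply: HF.
    move=> i j; rewrite /chanproj !filter_cat -!/(chanproj _ _ _) !chanproj_synch !altb_synch_cat.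
    by rewrite /=; case: ifP.
  move=> i; rewrite !proj_cat; case: (eqVneq i P) => [->|ne].
    rewrite (@proj_synch_nodst P ms'); last by move: Hh; rewrite -all_predC.
    rewrite {2}/proj /= eqxx.
    move: (H P); rewrite proj_cat proj_map_send filter_rcons eqxx map_rcons -cats1.
    by [].
  rewrite {3}/proj /= eq_sym (negbTE ne) cats0 -proj_cat; exact: IHm.
case/last_split: Hh => B1 [x [B2 [e hx hB2]]]; subst ms'.
have hxP : dst x = P by apply/eqP.
have sxP : (src x == P) = false by rewrite -hxP (negbTE (hsd x)).
have eB : rcons (B1 ++ x :: B2) y = B1 ++ x :: rcons B2 y by rewrite rcons_cat.
pose J := B1 ++ filter (fun a => src a == P) (rcons B2 y).
have IHJ : forall i, L i (proj i (synch_of A ++ synch_of J)).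
  apply: IHn.
    have := count_size (fun a => src a == P) (rcons B2 y).
    rewrite /J size_cat size_filter size_rcons; move: Hs; rewrite size_cat /=.
    lia.
  move=> i; move: (H i); rewrite !proj_cat !proj_map_send eB /J !filter_cat /=.
  case: (eqVneq i P) => [->|ne].
    by rewrite sxP filter_id.
  have -> : filter (fun a => src a == i) (filter (fun a => src a == P) (rcons B2 y)) = [::].
    elim: (rcons B2 y) => //= a s IHs; case: ifP => //= /eqP ->.
    by rewrite eq_sym (negbTE ne).
  by rewrite cats0 !map_cat catA; apply: L_prefix.
pose t := synch_of A ++ synch_of B1 ++ [:: Send x] ++ synch_of B2 ++ [:: Send y].
have := @F1 H1 t.
have -> : sends t = A ++ rcons (B1 ++ x :: B2) y.
  by rewrite /t !sends_cat !sends_synch /= -cats1 -!catA.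
rewrite synch_cat => HF; apply: HF.
  move=> i j; rewrite /t /chanproj !filter_cat -!/(chanproj _ _ _) !chanproj_synch !altb_synch_cat.
  rewrite /=; case: ifP => Hc /=; last first.
    by rewrite altb_synch_cat; case: ifP.
  move: Hc; rewrite /chp => /andP [/eqP ei /eqP ej].
  rewrite filter_chp_nil; last by rewrite -ej hxP; move: hB2; rewrite -all_predC.
  rewrite /= /chp -ei -ej hxP /P.
  by case: eqP => //= e1; move: (hsd x); rewrite hxP /P -e1 eqxx.
move=> i; rewrite !proj_cat; case: (eqVneq i P) => [->|ne].
  rewrite (@proj_synch_nodst P B2); last by move: hB2; rewrite -all_predC.
  rewrite {2}/proj {3}/proj /= sxP eqxx /=.
  move: (IHJ P); rewrite /J synch_cat !proj_cat (@proj_synch_src P (filter _ (rcons B2 y))); last exact: filter_all.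
  by rewrite filter_rcons eqxx map_rcons -cats1 !catA.
move: (IHm i); rewrite synch_cat synch_cons !proj_cat.
have e1 : proj i [:: Send x; Recv x] = proj i [:: Send x].
  by rewrite /proj /= hxP (eq_sym P) (negbTE ne).
have e2 : proj i [:: Send y] = [::].
  by rewrite /proj /=; case: eqP => // e; move: ne; rewrite -e /P eqxx.
by rewrite e1 e2 cats0.
Qed.

End Pf.

Theorem lemma4p7 (N : nat) (Msg : finType) (src dst : Msg -> 'I_N)
    (hN : 0 < N) (hsd : forall a, src a != dst a)
    (S : system N Msg) (tau : trace Msg) (ms : seq Msg) :
  one_synchronizable src dst S ->
  Tk src dst S 0 tau ->
  Tk src dst S (size ms) (tau ++ map (@Send Msg) ms) ->
  Tk src dst S 0 (tau ++ synch_of ms).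
Proof.
move=> H1 [[A eA] _] [_ [c Hr]]; subst tau.
have Hl := reach_lrun Hr.
have HM := @main N Msg src dst hsd S H1 A (size ms) ms (leqnn _) (fun i => ex_intro _ _ (Hl i)).
split; first by exists (A ++ ms); rewrite synch_cat.
have Hf : forall i j, fifo1 (chan (c0 S) i j) (chanproj src dst i j (synch_of A ++ synch_of ms)).
  by move=> i j; rewrite -synch_cat chanproj_synch /=; apply: altb_fifo1; apply: altb_synch.
have [c' Hr'] := @comp N Msg src dst S (synch_of A ++ synch_of ms) (c0 S) Hf HM.
by exists c'.
Qed.
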